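(* Let $1\le m<n$, $d\in[n]$, let every $v_j$ be $d$-self-bounding, fix $\mathbf s$, rename bidders so that $v_1(\mathbf s)\ge\cdots\ge v_n(\mathbf s)>0$, and let $k=\max\{i:v_i(\mathbf s)>v_m(\mathbf s)/2\}$. For $i\in[n]$ define $A_i=\sum_{j=1}^k\frac{m}{j(j+1)}\log_2^\dagger\!\big(v_j(\mathbf s)/\underline v_j^{(i)}(\mathbf s)\big)$. Then $\sum_{i=m}^kA_i\le 2dm$.
   Context: Signals $s_i\in S_i\subseteq\mathbb R$, $\mathbf S=S_1\times\cdots\times S_n$, valuations $v_j:\mathbf S\to\mathbb R_{>0}$. Lower estimates $\underline v_j^{(i)}(\mathbf s)=\inf_{o_i\in S_i}v_j(o_i,\mathbf s_{-i})$. $v$ is $d$-self-bounding if $\sum_i(v(\mathbf s)-\inf_{o_i}v(o_i,\mathbf s_{-i}))\le d\,v(\mathbf s)$ for all $\mathbf s$. $\log_2^\dagger(\alpha)=\max(0,\min(1,\log_2\alpha))$, with $a/0=\infty$, $\log_2\infty=\infty$. *)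

(* Defs.v *)
From HB Require Import structures.
From mathcomp Require Import all_boot all_order all_algebra.
From mathcomp Require Import all_classical all_reals all_analysis.
Set Implicit Arguments. Unset Strict Implicit. Unset Printing Implicit Defensive.
Import Order.TTheory GRing.Theory Num.Theory.
Local Open Scope classical_set_scope.
Local Open Scope ring_scope.

(* Bidders and signal coordinates are indexed by 'I_n; bidder number j
   (1-based, as in the paper) is the ordinal with value j-1. *)

Section Defs.
Variable R : realType.
Variable n : nat.

Definition upd (s : 'I_n -> R) (i : 'I_n) (o : R) : 'I_n -> R :=
  fun l => if l == i then o else s l.

Definition in_prod (S : 'I_n -> set R) (s : 'I_n -> R) : Prop :=
  forall i, S i (s i).

Definition lower_est (S : 'I_n -> set R) (v : ('I_n -> R) -> R)
    (i : 'I_n) (s : 'I_n -> R) : R :=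
  inf [set v (upd s i o) | o in S i].

Definition self_bounding (S : 'I_n -> set R) (d : R)
    (v : ('I_n -> R) -> R) : Prop :=
  forall s, in_prod S s ->
    \sum_(i < n) (v s - lower_est S v i s) <= d * v s.

(* valuation of the bidder with (1-based) number j; 0 if out of range *)
Definition vnum (v : 'I_n -> ('I_n -> R) -> R) (j : nat) (s : 'I_n -> R) : R :=
  if (insub j.-1 : option 'I_n) is Some o then v o s else 0.
End Defs.

(* log_2^dagger (a / b) = max(0, min(1, log_2 (a/b))), with the convention
   a/0 = +oo and log_2 +oo = +oo, so the value is 1 when b = 0. *)
Definition log2dag_ratio (R : realType) (a b : R) : R :=
  if b == 0 then 1 else Num.max 0 (Num.min 1 (ln (a / b) / ln 2)).

(* Main.v *)
Require Import Defs.
From HB Require Import structures.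
From mathcomp Require Import all_boot all_order all_algebra.
From mathcomp Require Import all_classical all_reals all_analysis.
From mathcomp Require Import ring lra.
Import Order.TTheory GRing.Theory Num.Theory.
Local Open Scope classical_set_scope.
Local Open Scope ring_scope.
Lemma key (R : realType) (a b : R) : 0 < a -> 0 <= b -> b <= a ->
  0 <= log2dag_ratio a b <= 2 * (1 - b / a).
Proof.
move=> a0 b0 ba; rewrite /log2dag_ratio.
have ra : b / a <= 1 by rewrite ler_pdivrMr // mul1r.
have r0 : 0 <= b / a by rewrite divr_ge0 // ltW.
case: eqP => [->|/eqP bn0]; first by rewrite mul0r subr0; lra.
rewrite le_max lexx /=.
have bp : 0 < b by rewrite lt_neqAle eq_sym bn0.
have l2 : 0 < ln (2:R) by rewrite ln_gt0 // ltr1n.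
have [rh|rh] := leP (b / a) (1/2).
  rewrite ge_max; apply/andP; split; first lra.
  rewrite ge_min; apply/orP; left; lra.
rewrite ge_max; apply/andP; split; first lra.
rewrite ge_min; apply/orP; right.
rewrite ler_pdivrMr //.
set r := b / a.
have rp : 0 < r by rewrite divr_gt0.
have -> : a / b = r^-1 by rewrite /r invf_div.
rewrite lnV ?posrE //.
have t0 : 0 <= 2 * r - 1.
  move: rh; rewrite -/r; lra.
have t1 : 2 * r - 1 <= 1 by move: ra; rewrite -/r; lra.
have := @concave_ln R (Itv01 t0 t1) 1 (1/2) ltr01 ltac:(lra).
rewrite !convRE /= ln1 mulr0 add0r.
have -> : (2 * r - 1) * 1 + (1 - (2 * r - 1)) * (1/2) = r by field.
rewrite mul1r lnV ?posrE //.
have -> : unstable.onem (2 * r - 1) * - ln (2:R) = - (2 * (1 - r) * ln 2).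
  by rewrite /unstable.onem; ring.
lra.
Qed.

Lemma tele (R : realType) (N : nat) :
  \sum_(j < N) (1 / (j.+1 * j.+2)%:R : R) = 1 - 1 / N.+1%:R.
Proof.
elim: N => [|N IH]; first by rewrite big_ord0 divr1 subrr.
rewrite big_ord_recr /= IH !natrM.
have h1 : (N.+1%:R : R) != 0 by rewrite pnatr_eq0.
have h2 : (N.+2%:R : R) != 0 by rewrite pnatr_eq0.
rewrite -[N.+2]addn1 natrD -[N.+1]addn1 natrD.
rewrite -[N.+1]addn1 natrD in h1.
rewrite -[N.+2]addn1 natrD -[N.+1]addn1 natrD in h2.
by field; rewrite ?h1 ?h2.
Qed.

Lemma lest (R : realType) n (S : 'I_n -> set R) (w : ('I_n -> R) -> R) s i :
  (forall t, in_prod S t -> 0 < w t) -> in_prod S s ->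
  0 <= lower_est S w i s <= w s.
Proof.
move=> hpos hs; rewrite /lower_est.
set E := [set w (upd s i o) | o in S i].
have inE : forall o, S i o -> in_prod S (upd s i o).
  by move=> o Ho l; rewrite /upd; case: eqP => [->|]. 
have lb0 : lbound E 0.
  by move=> y [z Hz <-]; apply/ltW/hpos/inE.
have Es : E (w s).
  exists (s i) => //; congr w; apply: boolp.funext => l; rewrite /upd.
  by case: eqP => [->|].
apply/andP; split.
  by apply: lb_le_inf => //; exists (w s).
by apply: ge_inf => //; exists 0.
Qed.

Theorem mainTheorem18 (R : realType) (n m d : nat)
    (S : 'I_n -> set R) (v : 'I_n -> ('I_n -> R) -> R) (s : 'I_n -> R)
    (hm1 : (1 <= m)%N) (hmn : (m < n)%N)
    (hd1 : (1 <= d)%N) (hdn : (d <= n)%N)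
    (hpos : forall j t, in_prod S t -> 0 < v j t)
    (hsb : forall j, self_bounding S d%:R (v j))
    (hs : in_prod S s)
    (hsorted : forall i j : 'I_n, (i <= j)%N -> v j s <= v i s) :
  let k : nat := \max_(j < n | vnum v m s / 2 < v j s) j.+1 in
  let A (i : 'I_n) : R :=
    \sum_(j < n | (j.+1 <= k)%N)
      (m%:R / (j.+1 * j.+2)%:R) * log2dag_ratio (v j s) (lower_est S (v j) i s) in
  \sum_(i < n | (m <= i.+1 <= k)%N) A i <= 2 * d%:R * m%:R.
Proof.
cbv zeta.
set k := (\max_(j < n | _) j.+1)%N.
have hL j i := @lest R n S (v j) s i (hpos j) hs.
have hx j : 0 < v j s := hpos j s hs.
have hK j i := @key R _ _ (hx j) (proj1 (andP (hL j i))) (proj2 (andP (hL j i))).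
have hc j : 0 <= (m%:R / (j.+1 * j.+2)%:R : R) by rewrite divr_ge0.
have hA0 i : 0 <= \sum_(j < n | (j.+1 <= k)%N)
      (m%:R / (j.+1 * j.+2)%:R) * log2dag_ratio (v j s) (lower_est S (v j) i s).
  apply: sumr_ge0 => j _; apply: mulr_ge0 => //.
  by case/andP: (hK j i).
apply: (@le_trans _ _ (\sum_(i < n) \sum_(j < n | (j.+1 <= k)%N)
      (m%:R / (j.+1 * j.+2)%:R) * log2dag_ratio (v j s) (lower_est S (v j) i s))).
  rewrite [X in _ <= X](bigID (fun i : 'I_n => (m <= i.+1 <= k)%N)) /=.
  by rewrite lerDl sumr_ge0.
rewrite exchange_big /=.
apply: (@le_trans _ _ (\sum_(j < n | (j.+1 <= k)%N) (m%:R / (j.+1 * j.+2)%:R) * (2 * d%:R))).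
  apply: ler_sum => j _; rewrite -mulr_sumr; apply: ler_wpM2l => //.
  apply: (@le_trans _ _ (\sum_(i < n) 2 * (1 - lower_est S (v j) i s / v j s))).
    by apply: ler_sum => i _; case/andP: (hK j i).
  have := hsb j s hs.
  rewrite -mulr_sumr => h; rewrite ler_pM2l ?ltr0n //.
  have -> : \sum_(i < n) (1 - lower_est S (v j) i s / v j s) =
     (\sum_(i < n) (v j s - lower_est S (v j) i s)) / v j s.
    rewrite mulr_suml; apply: eq_bigr => i _.
    by rewrite mulrBl divff // gt_eqF.
  by rewrite ler_pdivrMr.
apply: (@le_trans _ _ (\sum_(j < n) (m%:R / (j.+1 * j.+2)%:R) * (2 * d%:R))).
  rewrite [X in _ <= X](bigID (fun j : 'I_n => (j.+1 <= k)%N)) /=.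
  by rewrite lerDl sumr_ge0 // => j _; apply: mulr_ge0 => //; apply: mulr_ge0.
rewrite -mulr_suml.
have -> : \sum_(j < n) (m%:R / (j.+1 * j.+2)%:R : R) = m%:R * (1 - 1 / n.+1%:R).
  by rewrite -tele mulr_sumr; apply: eq_bigr => j _; rewrite mul1r.
have h1 : 0 <= (1 / n.+1%:R : R) by rewrite divr_ge0.
have hm : 0 <= (m%:R : R) by [].
have hd : 0 <= (d%:R : R) by [].
have hmd : 0 <= m%:R * d%:R * (1 / n.+1%:R : R) by rewrite !mulr_ge0.
have -> : m%:R * (1 - 1 / n.+1%:R) * (2 * d%:R) =
  2 * d%:R * m%:R - m%:R * d%:R * (1 / n.+1%:R : R) * 2 by ring.
by rewrite lerBlDr lerDl mulr_ge0.
Qed.
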